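(* For every type $t$, if $u:\mathbb{N}\to[\![t]\!]$ and $u':\mathbb{N}\to[\![t]\!]_s$ are ascending chains with $\mathsf{sim}\,t\,u_i\,u'_i$ for all $i$, then $\mathsf{sim}\,t\,(\bigsqcup_i u_i)\,(\bigsqcup_i u'_i)$.
   Context: Fix sets $\mathsf{Principals}$, $\mathsf{Privileges}$ and $\mathcal{A}:\mathsf{Principals}\to\mathcal{P}(\mathsf{Privileges})$. Types $t::=\mathtt{bool}\mid t_1\to t_2$. $\bot,\star$ are two distinct values, neither booleans nor functions. For a cpo $C$, $C_{\bot\star}=C\cup\{\bot,\star\}$ with $u\le v$ iff $u=\bot$ or $u=v$ or $u,v\in C$, $u\le v$. Eager domains: $[\![\mathtt{bool}]\!]=\{\mathsf{true},\mathsf{false}\}$, $\mathcal{P}(\mathsf{Privileges})$ ordered by equality, $[\![t_1\to t_2]\!]=\mathcal{P}(\mathsf{Privileges})\to[\![t_1]\!]\to[\![t_2]\!]_{\bot\star}$ (continuous, pointwise order, lubs pointwise). Stacks: $\mathsf{Stacks}$ = nonempty lists of pairs $\langle n,P\rangle\in\mathsf{Principals}\times\mathcal{P}(\mathsf{Privileges})$, ordered by equality; $\mathsf{check}(p,\mathrm{nil})$ false, $\mathsf{check}(p,\langle n,P\rangle::S)$ iff $p\in\mathcal{A}(n)\wedge(p\in P\vee\mathsf{check}(p,S))$; $\mathsf{privs}(S)=\{p:\mathsf{check}(p,S)\}$. Stack domains: $[\![\mathtt{bool}]\!]_s=\{\mathsf{true},\mathsf{false}\}$, $[\![t_1\to t_2]\!]_s=\mathsf{Stacks}\to[\![t_1]\!]_s\to([\![t_2]\!]_s)_{\bot\star}$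 (continuous, pointwise, lubs pointwise). Relation $\mathsf{sim}\,t\subseteq[\![t]\!]_{\bot\star}\times([\![t]\!]_s)_{\bot\star}$: $\mathsf{sim}\,t\,d\,d'$ is true if $d=d'\in\{\bot,\star\}$, false if $d\ne d'$ and one of them is in $\{\bot,\star\}$; otherwise $\mathsf{sim}\,\mathtt{bool}\,b\,b'$ iff $b=b'$, and $\mathsf{sim}(t_1\to t_2)\,f\,f'$ iff for all $S\in\mathsf{Stacks}$, $d\in[\![t_1]\!]$, $d'\in[\![t_1]\!]_s$: $\mathsf{sim}\,t_1\,d\,d'$ implies $\mathsf{sim}\,t_2\,(f(\mathsf{privs}\,S)d)\,(f'Sd')$. *)

(* Defs.v *)
From Stdlib Require Import List.
Import ListNotations.

Inductive ty : Type :=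
| TBool : ty
| TArr : ty -> ty -> ty.

Record poset : Type := Poset { car : Type; le : car -> car -> Prop }.

Inductive lifted (X : Type) : Type :=
| Bot : lifted X
| Star : lifted X
| Val : X -> lifted X.
Arguments Bot {X}.
Arguments Star {X}.
Arguments Val {X} _.

Definition lift_le {X : Type} (leX : X -> X -> Prop) (u v : lifted X) : Prop :=
  u = Bot \/ u = v \/ (exists x y, u = Val x /\ v = Val y /\ leX x y).

Definition ascending {X : Type} (leX : X -> X -> Prop) (c : nat -> X) : Prop :=
  forall n, leX (c n) (c (S n)).

Definition is_lub {X : Type} (leX : X -> X -> Prop) (c : nat -> X) (l : X) : Prop :=
  (forall n, leX (c n) l) /\ (forall m, (forall n, leX (c n) m) -> leX l m).

Definition continuous {X Y : Type} (leX : X -> X -> Prop) (leY : Y -> Y -> Prop)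
  (f : X -> Y) : Prop :=
  (forall x y, leX x y -> leY (f x) (f y)) /\
  (forall c l, ascending leX c -> is_lub leX c l -> is_lub leY (fun n => f (c n)) (f l)).

(* P(Privileges) is represented by predicates
   Privileges -> Prop, ordered by equality (so continuity in that argument
   is automatic). *)
Fixpoint den (Privileges : Type) (t : ty) : poset :=
  match t with
  | TBool => Poset bool (@eq bool)
  | TArr t1 t2 =>
      Poset
        { f : (Privileges -> Prop) -> car (den Privileges t1) ->
              lifted (car (den Privileges t2))
        | forall P, continuous (le (den Privileges t1))
                               (lift_le (le (den Privileges t2))) (f P) }
        (fun f g => forall P x,
             lift_le (le (den Privileges t2)) (proj1_sig f P x) (proj1_sig g P x))
  end.

Definition Stacks (Principals Privileges : Type) : Type :=
  { S : list (Principals * (Privileges -> Prop)) | S <> [] }.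

Fixpoint check_list {Principals Privileges : Type}
  (A : Principals -> Privileges -> Prop) (p : Privileges)
  (S : list (Principals * (Privileges -> Prop))) : Prop :=
  match S with
  | [] => False
  | (n, P) :: S' => A n p /\ (P p \/ check_list A p S')
  end.

Definition check {Principals Privileges : Type}
  (A : Principals -> Privileges -> Prop) (p : Privileges)
  (S : Stacks Principals Privileges) : Prop :=
  check_list A p (proj1_sig S).

Definition privs {Principals Privileges : Type}
  (A : Principals -> Privileges -> Prop) (S : Stacks Principals Privileges)
  : Privileges -> Prop :=
  fun p => check A p S.

Fixpoint dens (Principals Privileges : Type) (t : ty) : poset :=
  match t with
  | TBool => Poset bool (@eq bool)
  | TArr t1 t2 =>
      Poset
        { f : Stacks Principals Privileges -> car (dens Principals Privileges t1) ->
              lifted (car (dens Principals Privileges t2))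
        | forall S, continuous (le (dens Principals Privileges t1))
                               (lift_le (le (dens Principals Privileges t2))) (f S) }
        (fun f g => forall S x,
             lift_le (le (dens Principals Privileges t2))
                     (proj1_sig f S x) (proj1_sig g S x))
  end.

Fixpoint sim {Principals Privileges : Type} (A : Principals -> Privileges -> Prop)
  (t : ty) {struct t} :
  lifted (car (den Privileges t)) -> lifted (car (dens Principals Privileges t)) -> Prop :=
  match t return lifted (car (den Privileges t)) ->
                  lifted (car (dens Principals Privileges t)) -> Prop with
  | TBool => fun d d' =>
      match d, d' with
      | Bot, Bot => True
      | Star, Star => True
      | Val b, Val b' => b = b'
      | _, _ => False
      end
  | TArr t1 t2 => fun d d' =>
      match d, d' with
      | Bot, Bot => True
      | Star, Star => True
      | Val f, Val f' =>
          forall (S : Stacks Principals Privileges)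
                 (x : car (den Privileges t1))
                 (x' : car (dens Principals Privileges t1)),
            sim A t1 (Val x) (Val x') ->
            sim A t2 (proj1_sig f (privs A S) x) (proj1_sig f' S x')
      | _, _ => False
      end
  end.

(* Main.v *)
Require Import Defs.
From Stdlib Require Import List Arith Lia Classical ClassicalEpsilon.

Definition refl_on {X} (R : X -> X -> Prop) := forall x, R x x.
Definition trans_on {X} (R : X -> X -> Prop) := forall x y z, R x y -> R y z -> R x z.
Definition complete_on {X} (R : X -> X -> Prop) :=
  forall c, ascending R c -> exists l, is_lub R c l.

Section Lift.
Variable X : Type.
Variable leX : X -> X -> Prop.
Hypothesis Hr : refl_on leX.
Hypothesis Ht : trans_on leX.

Lemma lift_refl u : lift_le leX u u.
Proof. right; left; reflexivity. Qed.

Lemma lift_trans : trans_on (lift_le leX).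
Proof.
  intros u v w [->|[->|(a&b&->&->&Hab)]] H2; try (left; reflexivity); auto.
  destruct H2 as [H2|[<-|(c&d&Hc&->&Hcd)]]; try discriminate.
  - right; right; eauto.
  - injection Hc as <-. right; right; exists a, d; eauto.
Qed.

Lemma chain_mono c : ascending (lift_le leX) c -> forall n m, n <= m -> lift_le leX (c n) (c m).
Proof.
  intros Hc n m H; induction H. apply lift_refl.
  eapply lift_trans; eauto.
Qed.

Lemma lift_le_bot u : lift_le leX u Bot -> u = Bot.
Proof. intros [H|[H|(a&b&_&H&_)]]; auto; discriminate. Qed.

Lemma lift_star_le u : lift_le leX Star u -> u = Star.
Proof. intros [H|[H|(a&b&H&_&_)]]; auto; discriminate. Qed.

Lemma lift_val_le a u : lift_le leX (Val a) u -> exists b, u = Val b /\ leX a b.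
Proof.
  intros [H|[H|(x&y&H&->&Hxy)]]; try discriminate.
  - subst; exists a; split; auto.
  - injection H as ->. eauto.
Qed.

Lemma lift_val_val a b : lift_le leX (Val a) (Val b) -> leX a b.
Proof. intros H; destruct (lift_val_le _ _ H) as (b'&E&Hb). injection E as ->. auto. Qed.

Lemma val_tail c i a : ascending (lift_le leX) c -> c i = Val a ->
  forall n, c (n + i) = Val (match c (n + i) with Val z => z | _ => a end).
Proof.
  intros Hc Hi n; induction n; simpl.
  - rewrite Hi; reflexivity.
  - destruct (c (n+i)) eqn:E; try discriminate.
    specialize (Hc (n+i)). rewrite E in Hc.
    destruct (lift_val_le _ _ Hc) as (b&->&_). reflexivity.
Qed.

Lemma tail_asc c i d : ascending (lift_le leX) c -> (forall n, c (n+i) = Val (d n)) ->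
  ascending leX d.
Proof.
  intros Hc Hd n. apply lift_val_val. rewrite <- !Hd. apply (Hc (n+i)).
Qed.

Lemma ub_all c i d m : ascending (lift_le leX) c -> (forall n, c (n+i) = Val (d n)) ->
  (forall n, leX (d n) m) -> forall k, lift_le leX (c k) (Val m).
Proof.
  intros Hc Hd Hm k. destruct (le_lt_dec i k).
  - replace k with ((k - i) + i) by lia. rewrite Hd. right; right; eauto.
  - eapply lift_trans. apply (chain_mono c Hc k i); lia.
    change i with (0 + i). rewrite Hd. right; right; eauto.
Qed.

Lemma lub_val_inner c i d l : ascending (lift_le leX) c ->
  (forall n, c (n+i) = Val (d n)) -> is_lub (lift_le leX) c l ->
  exists y, l = Val y /\ is_lub leX d y.
Proof.
  intros Hc Hd [Hu Hl].
  pose proof (Hu i) as H0. change i with (0+i) in H0. rewrite Hd in H0.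
  destruct (lift_val_le _ _ H0) as (y&->&_).
  exists y; split; auto. split.
  - intros n. apply lift_val_val. rewrite <- Hd. apply Hu.
  - intros m Hm. apply lift_val_val. apply Hl. eapply ub_all; eauto.
Qed.

Lemma lub_tail c i d y : ascending (lift_le leX) c ->
  (forall n, c (n+i) = Val (d n)) -> is_lub leX d y -> is_lub (lift_le leX) c (Val y).
Proof.
  intros Hc Hd [Hu Hl]. split.
  - eapply ub_all; eauto.
  - intros m Hm. pose proof (Hm i) as H0. change i with (0+i) in H0. rewrite Hd in H0.
    destruct (lift_val_le _ _ H0) as (b&->&_).
    right; right. exists y, b; repeat split; auto. apply Hl.
    intros n. apply lift_val_val. rewrite <- Hd. apply Hm.
Qed.

Lemma lift_complete : complete_on leX -> complete_on (lift_le leX).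
Proof.
  intros Hco c Hc.
  destruct (classic (exists i, c i = Star)) as [[i Hi]|Hns].
  - exists Star. split.
    + intros n. destruct (le_lt_dec i n).
      * pose proof (chain_mono c Hc i n l) as H. rewrite Hi in H.
        rewrite (lift_star_le _ H). apply lift_refl.
      * pose proof (chain_mono c Hc n i) as H. rewrite Hi in H. apply H; lia.
    + intros m Hm. specialize (Hm i). rewrite Hi in Hm. rewrite (lift_star_le _ Hm). apply lift_refl.
  - destruct (classic (exists i a, c i = Val a)) as [(i&a&Hi)|Hnv].
    + pose proof (val_tail c i a Hc Hi) as Hd.
      destruct (Hco _ (tail_asc c i _ Hc Hd)) as [y Hy].
      exists (Val y). eapply lub_tail; [exact Hc|exact Hd|exact Hy].
    + exists Bot. assert (HB : forall n, c n = Bot).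
      { intros n. destruct (c n) eqn:E; auto. exfalso; eauto. exfalso; eauto. }
      split. intros n; rewrite HB; apply lift_refl. intros m _; left; reflexivity.
Qed.

End Lift.

Section Fun.
Variables I Y Z : Type.
Variable leY : Y -> Y -> Prop.
Variable leZ : Z -> Z -> Prop.
Hypothesis Hr : refl_on leZ.
Hypothesis Ht : trans_on leZ.
Hypothesis Hco : complete_on leZ.

Definition F := { f : I -> Y -> lifted Z | forall i, continuous leY (lift_le leZ) (f i) }.
Definition leF (f g : F) := forall i y, lift_le leZ (proj1_sig f i y) (proj1_sig g i y).

Lemma leF_refl : refl_on leF.
Proof. intros f i y; apply lift_refl. Qed.

Lemma leF_trans : trans_on leF.
Proof. intros f g h H1 H2 i y. eapply lift_trans; eauto. Qed.

Lemma fun_pointwise_ex (c : nat -> F) : ascending leF c ->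
  exists g : F, is_lub leF c g /\ forall i y, is_lub (lift_le leZ) (fun n => proj1_sig (c n) i y) (proj1_sig g i y).
Proof.
  intros Hc.
  assert (Hex : forall i y, exists l, is_lub (lift_le leZ) (fun n => proj1_sig (c n) i y) l).
  { intros i y. apply lift_complete; auto. intros n; apply Hc. }
  set (g := fun i y => proj1_sig (constructive_indefinite_description _ (Hex i y))).
  assert (Hg : forall i y, is_lub (lift_le leZ) (fun n => proj1_sig (c n) i y) (g i y)).
  { intros i y; unfold g; destruct (constructive_indefinite_description _ _); auto. }
  assert (Hmono : forall i x y, leY x y -> lift_le leZ (g i x) (g i y)).
  { intros i x y Hxy. apply (proj2 (Hg i x)). intros n.
    eapply lift_trans; auto. apply (proj1 (proj2_sig (c n) i)). exact Hxy.
    apply (proj1 (Hg i y)). }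
  assert (Hcont : forall i, continuous leY (lift_le leZ) (g i)).
  { intros i; split. apply Hmono.
    intros d l Hd Hl. split.
    - intros k. apply Hmono. apply (proj1 Hl).
    - intros m Hm. apply (proj2 (Hg i l)). intros n.
      pose proof (proj2 (proj2_sig (c n) i) d l Hd Hl) as [_ Hle].
      apply Hle. intros k. eapply lift_trans; auto. apply (proj1 (Hg i (d k))). }
  exists (exist _ g Hcont). split; [split|auto].
  - intros n i y. apply (proj1 (Hg i y)).
  - intros m Hm i y. apply (proj2 (Hg i y)). intros n; apply Hm.
Qed.

Lemma fun_complete : complete_on leF.
Proof. intros c Hc. destruct (fun_pointwise_ex c Hc) as (g&H&_). eauto. Qed.

Lemma fun_pointwise (c : nat -> F) h : ascending leF c -> is_lub leF c h ->
  forall i y, is_lub (lift_le leZ) (fun n => proj1_sig (c n) i y) (proj1_sig h i y).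
Proof.
  intros Hc [Hu Hl] i y. destruct (fun_pointwise_ex c Hc) as (g&[Gu Gl]&Hg).
  split.
  - intros n; apply Hu.
  - intros m Hm. eapply lift_trans; auto. apply (Hl g Gu). apply (proj2 (Hg i y)). exact Hm.
Qed.

End Fun.

Lemma den_props Pv t : refl_on (le (den Pv t)) /\ trans_on (le (den Pv t)) /\ complete_on (le (den Pv t)).
Proof.
  induction t as [|t1 IH1 t2 IH2]; simpl.
  - split; [|split].
    + intros x; reflexivity.
    + intros x y z; apply eq_trans.
    + intros c Hc. exists (c 0). assert (H : forall n, c n = c 0).
      { induction n; auto. rewrite <- IHn. symmetry; apply Hc. }
      split. intros n; rewrite H; reflexivity. intros m Hm; apply Hm.
  - destruct IH2 as (R2&T2&C2). split; [|split].
    + exact (leF_refl (Pv -> Prop) _ _ (le (den Pv t1)) (le (den Pv t2))).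
    + exact (leF_trans (Pv -> Prop) _ _ (le (den Pv t1)) (le (den Pv t2)) T2).
    + exact (fun_complete (Pv -> Prop) _ _ (le (den Pv t1)) (le (den Pv t2)) R2 T2 C2).
Qed.

Lemma dens_props Pc Pv t : refl_on (le (dens Pc Pv t)) /\ trans_on (le (dens Pc Pv t)) /\ complete_on (le (dens Pc Pv t)).
Proof.
  induction t as [|t1 IH1 t2 IH2]; simpl.
  - split; [|split].
    + intros x; reflexivity.
    + intros x y z; apply eq_trans.
    + intros c Hc. exists (c 0). assert (H : forall n, c n = c 0).
      { induction n; auto. rewrite <- IHn. symmetry; apply Hc. }
      split. intros n; rewrite H; reflexivity. intros m Hm; apply Hm.
  - destruct IH2 as (R2&T2&C2). split; [|split].
    + exact (leF_refl (Stacks Pc Pv) _ _ (le (dens Pc Pv t1)) (le (dens Pc Pv t2))).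
    + exact (leF_trans (Stacks Pc Pv) _ _ (le (dens Pc Pv t1)) (le (dens Pc Pv t2)) T2).
    + exact (fun_complete (Stacks Pc Pv) _ _ (le (dens Pc Pv t1)) (le (dens Pc Pv t2)) R2 T2 C2).
Qed.

Section LiftSim.
Variables X Y : Type.
Variable leX : X -> X -> Prop.
Variable leY : Y -> Y -> Prop.
Hypothesis HrX : refl_on leX.
Hypothesis HtX : trans_on leX.
Hypothesis HrY : refl_on leY.
Hypothesis HtY : trans_on leY.
Variable R : lifted X -> lifted Y -> Prop.
Hypothesis RBB : R Bot Bot.
Hypothesis RSS : R Star Star.
Hypothesis Rshape : forall a b, R a b -> (a = Bot <-> b = Bot) /\ (a = Star <-> b = Star).
Hypothesis Rval : forall d d' y y', ascending leX d -> ascending leY d' ->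
  (forall n, R (Val (d n)) (Val (d' n))) -> is_lub leX d y -> is_lub leY d' y' -> R (Val y) (Val y').

Lemma star_lub {W} (leW : W -> W -> Prop) c l i : is_lub (lift_le leW) c l -> c i = Star -> l = Star.
Proof. intros [Hu _] Hi. specialize (Hu i). rewrite Hi in Hu. eapply lift_star_le; eauto. Qed.

Lemma lift_sim c c' l l' : ascending (lift_le leX) c -> ascending (lift_le leY) c' ->
  (forall n, R (c n) (c' n)) -> is_lub (lift_le leX) c l -> is_lub (lift_le leY) c' l' -> R l l'.
Proof.
  intros Hc Hc' HR Hl Hl'.
  destruct (classic (exists i, c i = Star)) as [[i Hi]|Hns].
  - assert (Hi' : c' i = Star) by (apply (proj2 (Rshape _ _ (HR i))); auto).
    rewrite (star_lub _ _ _ _ Hl Hi), (star_lub _ _ _ _ Hl' Hi'). auto.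
  - destruct (classic (exists i a, c i = Val a)) as [(i&a&Hi)|Hnv].
    + assert (exists a', c' i = Val a') as [a' Hi'].
      { destruct (c' i) eqn:E; eauto; exfalso.
        - apply (proj2 (proj1 (Rshape _ _ (HR i)))) in E. congruence.
        - apply (proj2 (proj2 (Rshape _ _ (HR i)))) in E. congruence. }
      pose proof (val_tail X leX HrX c i a Hc Hi) as Hd.
      pose proof (val_tail Y leY HrY c' i a' Hc' Hi') as Hd'.
      destruct (lub_val_inner X leX HrX HtX c i _ l Hc Hd Hl) as (y&->&Hy).
      destruct (lub_val_inner Y leY HrY HtY c' i _ l' Hc' Hd' Hl') as (y'&->&Hy').
      refine (Rval _ _ y y' (tail_asc X leX HrX c i _ Hc Hd) (tail_asc Y leY HrY c' i _ Hc' Hd') _ Hy Hy').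
      intros n. rewrite <- Hd, <- Hd'. apply HR.
    + assert (HB : forall n, c n = Bot).
      { intros n. destruct (c n) eqn:E; auto. exfalso; eauto. exfalso; eauto. }
      assert (HB' : forall n, c' n = Bot).
      { intros n. apply (proj1 (proj1 (Rshape _ _ (HR n)))). auto. }
      assert (l = Bot). { apply (lift_le_bot X leX). apply (proj2 Hl). intros n; rewrite HB; left; auto. }
      assert (l' = Bot). { apply (lift_le_bot Y leY). apply (proj2 Hl'). intros n; rewrite HB'; left; auto. }
      subst; auto.
Qed.
End LiftSim.

Lemma sim_shape {Pc Pv} (A : Pc -> Pv -> Prop) t a b : sim A t a b ->
  (a = Bot <-> b = Bot) /\ (a = Star <-> b = Star).
Proof.
  destruct t; destruct a, b; simpl; intros H; try contradiction;
  split; split; intros; congruence.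
Qed.

Lemma sim_BB {Pc Pv} (A : Pc -> Pv -> Prop) t : sim A t Bot Bot.
Proof. destruct t; simpl; auto. Qed.
Lemma sim_SS {Pc Pv} (A : Pc -> Pv -> Prop) t : sim A t Star Star.
Proof. destruct t; simpl; auto. Qed.

Theorem lemma6 (Principals Privileges : Type) (A : Principals -> Privileges -> Prop)
  (t : ty)
  (u : nat -> car (den Privileges t))
  (u' : nat -> car (dens Principals Privileges t))
  (lu : car (den Privileges t))
  (lu' : car (dens Principals Privileges t)) :
  ascending (le (den Privileges t)) u ->
  ascending (le (dens Principals Privileges t)) u' ->
  (forall i, sim A t (Val (u i)) (Val (u' i))) ->
  is_lub (le (den Privileges t)) u lu ->
  is_lub (le (dens Principals Privileges t)) u' lu' ->
  sim A t (Val lu) (Val lu').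
Proof.
  revert u u' lu lu'.
  induction t as [|t1 IH1 t2 IH2]; intros u u' lu lu' Hu Hu' Hs Hl Hl'.
  - simpl in *.
    assert (H : forall n, u n = u 0).
    { induction n; auto. rewrite <- IHn. symmetry; apply Hu. }
    assert (H' : forall n, u' n = u' 0).
    { induction n; auto. rewrite <- IHn. symmetry; apply Hu'. }
    rewrite <- (proj1 Hl 0), <- (proj1 Hl' 0). apply (Hs 0).
  - simpl. intros S x x' Hx.
    destruct (den_props Privileges t2) as (R2&T2&_).
    destruct (dens_props Principals Privileges t2) as (R2'&T2'&_).
    eapply (lift_sim _ _ (le (den Privileges t2)) (le (dens Principals Privileges t2)) R2 T2 R2' T2'
              (sim A t2) (sim_BB A t2) (sim_SS A t2) (sim_shape A t2) (IH2))
      with (c := fun n => proj1_sig (u n) (privs A S) x)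
           (c' := fun n => proj1_sig (u' n) S x').
    + intros n. apply Hu.
    + intros n. apply Hu'.
    + intros n. exact (Hs n S x x' Hx).
    + exact (fun_pointwise (Privileges -> Prop) _ _ (le (den Privileges t1)) (le (den Privileges t2))
               R2 T2 (proj2 (proj2 (den_props Privileges t2))) u lu Hu Hl (privs A S) x).
    + exact (fun_pointwise (Stacks Principals Privileges) _ _ (le (dens Principals Privileges t1))
               (le (dens Principals Privileges t2))
               R2' T2' (proj2 (proj2 (dens_props Principals Privileges t2))) u' lu' Hu' Hl' S x').
Qed.
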